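(* Let $\Pi$ be a program (AST) of the DSL and let $e=(e_{in},e_{out})$ be an input-output example such that $\Pi$ does not satisfy $e$, i.e. $[\![\Pi]\!]e_{in}\neq e_{out}$. Then there exists a proof of incorrectness of $\Pi$ with respect to $e$, i.e. a mapping $\mathcal{I}$ from the nodes of $\Pi$ to abstract values over the universe $\mathcal{U}$ such that: (1) for every leaf $v$ of $\Pi$ labelled by a terminal $t$, $(t=[\![t]\!]e_{in})\sqsubseteq \mathcal{I}(v)$; (2) for every internal node $v$ labelled $f$ with children $v_1,\dots,v_n$, $[\![f(\mathcal{I}(v_1),\dots,\mathcal{I}(v_n))]\!]^\#\sqsubseteq \mathcal{I}(v)$; (3) $e_{out}\notin\gamma(\mathcal{I}(r))$, where $r$ is the root of $\Pi$.
   Context: A DSL is given by a context-free grammar $G$ with start symbol $s_0$. Each production has the form $s\to t$ with $t$ a terminal, which is either the program input variable $x$ or a constant, or $s\to f(s_1,\dots,s_n)$ with $f$ a DSL function symbol. Programs are finite abstract syntax trees derived from $s_0$: each leaf is labelled by a terminal, each internal node by a function symbol $f$ whose children are derived from $s_1,\dots,s_n$, and each node carries the grammar symbol it is derived from. Concrete semantics: $[\![x]\!]c=c$ for an input $c$; $[\![t]\!]c=[\![t]\!]$, the fixed value of a constant $t$; and $[\![f(\Pi_1,\dots,\Pi_n)]\!]c=[\![f]\!]([\![\Pi_1]\!]c,\dots,[\![\Pi_n]\!]c)$. An example is a pair $e=(e_{in},e_{out})$, and $\Pi$ satisfies $e$ iff $[\![\Pi]\!]e_{in}=e_{out}$. A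 predicate over a grammar symbol $s$ is a logical formula whose only free variable is $s$ (e.g. $s=c$ or $0<s\le 8$). An abstract value for $s$ is a conjunction of predicates over $s$, where $\mathit{true}$ is the empty conjunction. $\gamma(\varphi)$ denotes the set of values satisfying $\varphi$, and $\varphi\sqsubseteq\varphi'$ means $\varphi\Rightarrow\varphi'$. A fixed universe $\mathcal{U}$ of predicates is given; an abstract value over $\mathcal{U}$ is a conjunction of predicates from $\mathcal{U}$. It is assumed that $\mathcal{U}$ contains, for every grammar symbol $s$ and every value $c$ of the corresponding type, the predicate $s=c$. For each production $s\to f(s_1,\dots,s_n)$ there is an abstract transformer mapping abstract values $\varphi_1,\dots,\varphi_n$ (over $s_1,\dots,s_n$) to an abstract value $[\![f(\varphi_1,\dots,\varphi_n)]\!]^\#$ over $s$. It is sound: $c_i\in\gamma(\varphi_i)$ for all $i$ implies $[\![f]\!](c_1,\dots,c_n)\in\gamma([\![f(\varphi_1,\dots,\varphi_n)]\!]^\#)$. It is also precise on concrete inputs: $[\![f(s_1=c_1,\dots,s_n=c_n)]\!]^\#\sqsubseteq (s=[\![f]\!](c_1,\dots,c_n))$. *)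

(* Defs.v *)
From Stdlib Require Import List.
Import ListNotations.
Set Implicit Arguments.

Inductive terminal (K : Type) : Type :=
| TInput : terminal K
| TConst : K -> terminal K.
Arguments TInput {K}.

Record DSL := {
  Sym   : Type;
  Val   : Type;
  Const : Type;
  Fn    : Type;
  const_val : Const -> Val;
  fn_sem : Fn -> list Val -> Val;
  start : Sym;
  prodT : Sym -> terminal Const -> Prop;   (* productions s -> t *)
  prodF : Sym -> Fn -> list Sym -> Prop;   (* productions s -> f(s1,...,sn) *)
  Pred  : Type;                      (* predicates (formulas with one free grammar symbol) *)
  pred_sym : Pred -> Sym;
  pred_sem : Pred -> Val -> Prop;
  eqp : Sym -> Val -> Pred;          (* the predicate  s = c *)
  univ : Pred -> Prop;
  (* abstract transformer of production s -> f(s1..sn), applied to phi1..phin *)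
  absT : Sym -> Fn -> list Sym -> list (list Pred) -> list Pred
}.

Section Defs.
Variable D : DSL.

(* abstract values = conjunctions (lists) of predicates *)
Definition absval := list (Pred D).

Definition gamma (phi : absval) (v : Val D) : Prop :=
  forall p, In p phi -> pred_sem D p v.

Definition absle (phi phi' : absval) : Prop :=
  forall v, gamma phi v -> gamma phi' v.

Definition over (s : Sym D) (phi : absval) : Prop :=
  forall p, In p phi -> pred_sym D p = s.

Definition overU (phi : absval) : Prop :=
  forall p, In p phi -> univ D p.

Definition term_sem (t : terminal (Const D)) (c : Val D) : Val D :=
  match t with TInput => c | TConst k => const_val D k end.

Inductive prog : Type :=
| Leaf : Sym D -> terminal (Const D) -> prog
| Node : Sym D -> Fn D -> list prog -> prog.

Definition psym (p : prog) : Sym D :=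
  match p with Leaf s _ => s | Node s _ _ => s end.

Fixpoint wf (p : prog) : Prop :=
  match p with
  | Leaf s t => prodT D s t
  | Node s f cs =>
      prodF D s f (map psym cs) /\
      (fix wfl (l : list prog) : Prop :=
         match l with nil => True | c :: l' => wf c /\ wfl l' end) cs
  end.

Definition program (p : prog) : Prop := psym p = start D /\ wf p.

Fixpoint eval (p : prog) (c : Val D) : Val D :=
  match p with
  | Leaf _ t => term_sem t c
  | Node _ f cs => fn_sem D f (map (fun q => eval q c) cs)
  end.

(* Nodes of a program are addressed by paths (lists of child indices);
   the root is []. A mapping I from nodes to abstract values is a function on
   paths. [proof_at I ein pos p] states conditions (1),(2) (and that the
   values are abstract values over U for the node's symbol) for every node of
   the subtree p located at position pos. *)
Fixpoint proof_at (I : list nat -> absval) (ein : Val D) (pos : list nat) (p : prog)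
  : Prop :=
  match p with
  | Leaf s t =>
      overU (I pos) /\ over s (I pos) /\
      absle [eqp D s (term_sem t ein)] (I pos)
  | Node s f cs =>
      overU (I pos) /\ over s (I pos) /\
      absle (absT D s f (map psym cs)
               (map (fun i => I (pos ++ [i])) (seq 0 (length cs))))
            (I pos) /\
      (fix pl (i : nat) (l : list prog) : Prop :=
         match l with
         | nil => True
         | c :: l' => proof_at I ein (pos ++ [i]) c /\ pl (S i) l'
         end) 0 cs
  end.

Definition incorrectness_proof (I : list nat -> absval) (p : prog) (ein eout : Val D)
  : Prop :=
  proof_at I ein [] p /\ ~ gamma (I []) eout.

End Defs.

(* Main.v *)
Require Import Defs.
From Stdlib Require Import List Lia.
Import ListNotations.

Section Aux.
Variable D : DSL.

Fixpoint subtree (p : prog D) (pos : list nat) : option (prog D) :=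
  match pos with
  | [] => Some p
  | i :: rest =>
    match p with
    | Leaf _ _ _ => None
    | Node _ _ cs => match nth_error cs i with Some c => subtree c rest | None => None end
    end
  end.

Lemma subtree_app p pos s f cs i c :
  subtree p pos = Some (Node s f cs) -> nth_error cs i = Some c ->
  subtree p (pos ++ [i]) = Some c.
Proof.
  revert p; induction pos as [|j pos IH]; intros p H1 H2; simpl in *.
  - inversion H1; subst; simpl. now rewrite H2.
  - destruct p; try discriminate. destruct (nth_error l j); try discriminate.
    now apply IH.
Qed.

Lemma prog_ind' (Q : prog D -> Prop)
  (HL : forall s t, Q (Leaf D s t))
  (HN : forall s f cs, Forall Q cs -> Q (Node s f cs)) : forall p, Q p.
Proof.
  fix IH 1. intros [s t|s f cs]. apply HL. apply HN.
  induction cs as [|c cs IHc]; constructor; auto.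
Qed.

Fixpoint wfl (l : list (prog D)) : Prop :=
  match l with nil => True | c :: l' => wf c /\ wfl l' end.

Lemma wfl_nth l j c : wfl l -> nth_error l j = Some c -> wf c.
Proof.
  revert j; induction l; intros [|j] H1 H2; simpl in *; try discriminate.
  inversion H2; subst; tauto. apply (IHl j); tauto.
Qed.

Lemma map_seq_nth {A B} (F : nat -> B) (g : A -> B) cs : forall k,
  (forall j c, nth_error cs j = Some c -> F (k + j) = g c) ->
  map F (seq k (length cs)) = map g cs.
Proof.
  induction cs as [|c cs IH]; intros k H; simpl; auto.
  f_equal. rewrite <- (H 0 c) by reflexivity. f_equal; lia.
  apply IH. intros j c' Hj. rewrite <- (H (S j) c') by exact Hj. f_equal; lia.
Qed.

Lemma combine_map {A B C} (f : A -> B) (g : A -> C) l :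
  combine (map f l) (map g l) = map (fun x => (f x, g x)) l.
Proof. induction l; simpl; congruence. Qed.

Variable P : prog D.
Variable ein : Val D.

Definition Ii (pos : list nat) : absval D :=
  match subtree P pos with
  | Some q => [eqp D (psym q) (eval q ein)]
  | None => []
  end.

Definition pl (pos : list nat) : nat -> list (prog D) -> Prop :=
  fix pl (i : nat) (l : list (prog D)) : Prop :=
  match l with
  | nil => True
  | c :: l' => proof_at Ii ein (pos ++ [i]) c /\ pl (S i) l'
  end.

Lemma pl_ok pos l : forall k,
  (forall j c, nth_error l j = Some c -> proof_at Ii ein (pos ++ [k + j]) c) ->
  pl pos k l.
Proof.
  induction l as [|c l IH]; intros k H; simpl; auto. split.
  - replace k with (k + 0) at 1 by lia. now apply H.
  - apply IH. intros j c' Hj. replace (S k + j) with (k + S j) by lia. now apply H.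
Qed.

Hypothesis eqp_sym : forall s c, pred_sym D (eqp D s c) = s.
Hypothesis univ_eqp : forall s c, univ D (eqp D s c).
Hypothesis absT_precise : forall s f ss (cs : list (Val D)),
      prodF D s f ss -> length cs = length ss ->
      absle (absT D s f ss (map (fun sc => [eqp D (fst sc) (snd sc)]) (combine ss cs)))
            [eqp D s (fn_sem D f cs)].

Lemma main_aux : forall q, forall pos, subtree P pos = Some q -> wf q ->
  proof_at Ii ein pos q.
Proof.
  apply (prog_ind' (fun q => forall pos, subtree P pos = Some q -> wf q -> proof_at Ii ein pos q)).
  - intros s t pos H W. simpl. unfold Ii. rewrite H. simpl.
    split; [|split].
    + intros p [<-|[]]. apply univ_eqp.
    + intros p [<-|[]]. apply eqp_sym.
    + intros v Hv; exact Hv.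
  - intros s f cs IHcs pos H W. simpl in W. destruct W as [Wp Wl].
    change (wfl cs) in Wl.
    simpl. unfold Ii at 1 2 4. rewrite H. simpl.
    split; [|split; [|split]].
    + intros p [<-|[]]. apply univ_eqp.
    + intros p [<-|[]]. apply eqp_sym.
    + erewrite map_seq_nth.
      2:{ intros j c Hj. simpl. unfold Ii.
          rewrite (subtree_app _ _ _ _ _ _ _ H Hj). reflexivity. }
      pose proof (absT_precise _ _ _ (map (fun q => eval q ein) cs) Wp) as Hp.
      rewrite combine_map, map_map in Hp. apply Hp.
      now rewrite !length_map.
    + change (pl pos 0 cs). apply pl_ok. intros j c Hj. simpl.
      rewrite Forall_forall in IHcs. apply IHcs.
      eapply nth_error_In; eauto.
      eapply subtree_app; eauto.
      eapply wfl_nth; eauto.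
Qed.
End Aux.

Theorem mainTheorem1 (D : DSL)
  (* semantics of the predicates  s = c *)
  (eqp_sem : forall s c v, pred_sem D (eqp D s c) v <-> v = c)
  (eqp_sym : forall s c, pred_sym D (eqp D s c) = s)
  (* U contains s = c for every symbol s and value c *)
  (univ_eqp : forall s c, univ D (eqp D s c))
  (* transformers produce abstract values over the head symbol *)
  (absT_over : forall s f ss phis, prodF D s f ss ->
      over s (absT D s f ss phis))
  (* soundness of the abstract transformers *)
  (absT_sound : forall s f ss (phis : list (absval D)) (cs : list (Val D)),
      prodF D s f ss -> length phis = length ss ->
      Forall2 (fun phi c => gamma phi c) phis cs ->
      gamma (absT D s f ss phis) (fn_sem D f cs))
  (* precision on concrete inputs *)
  (absT_precise : forall s f ss (cs : list (Val D)),
      prodF D s f ss -> length cs = length ss ->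
      absle (absT D s f ss (map (fun sc => [eqp D (fst sc) (snd sc)]) (combine ss cs)))
            [eqp D s (fn_sem D f cs)])
  (P : prog D) (ein eout : Val D) :
  program P -> eval P ein <> eout ->
  exists I : list nat -> absval D, incorrectness_proof I P ein eout.
Proof.
  intros [_ W] Hne. exists (Ii D P ein). split.
  - apply main_aux; auto.
  - unfold Ii; simpl. intros G. apply Hne.
    symmetry. apply (eqp_sem (psym P)). apply G. left; reflexivity.
Qed.
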